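(* Let $(Q,\mathcal D,L)$ be a $G$-Chaplygin system whose shape space $S=Q/G$ has dimension $r\ge 2$, and let $H$, $C_{ij}^k$, $\nu$ be as in the context. Suppose that: (1) the reduced equations of motion preserve the measure $\mu=\exp(\sigma(s))\,\nu$ for some $\sigma\in C^\infty(S)$; (2) the gyroscopic coefficients satisfy hypothesis (H) everywhere on $S$. Then, after the time and momentum reparametrisation $$dt=\exp\Big(\tfrac{\sigma(s)}{1-r}\Big)\,d\tau,\qquad p_i=\exp\Big(\tfrac{\sigma(s)}{1-r}\Big)\,\tilde p_i,\quad i=1,\dots,r,$$ the reduced equations of motion take the Hamiltonian form $$\frac{ds^i}{d\tau}=\frac{\partial\tilde H}{\partial\tilde p_i},\qquad \frac{d\tilde p_i}{d\tau}=-\frac{\partial\tilde H}{\partial s^i},\qquad i=1,\dots,r,$$ where $\tilde H(s,\tilde p)=H\big(s,\exp\big(\tfrac{\sigma(s)}{1-r}\big)\tilde p\big)$.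
   Context: A nonholonomic system is a triple $(Q,\mathcal D,L)$ with $Q$ an $n$-dimensional manifold, $\mathcal D\subset TQ$ a rank-$r$ non-integrable distribution, and $L=K-U$ where $K(v)=\tfrac12\langle v,v\rangle$ for a Riemannian metric $\langle\cdot,\cdot\rangle$ on $Q$ and $U:Q\to\mathbb R$. It is a $G$-Chaplygin system if a Lie group $G$ (Lie algebra $\mathfrak g$) acts freely and properly on $Q$ such that: (i) $G$ acts by isometries and $U$ is $G$-invariant; (ii) $T_q\Phi_g(\mathcal D_q)=\mathcal D_{\Phi_g(q)}$ for all $g\in G$; (iii) $T_qQ=\mathcal D_q\oplus(\mathfrak g\cdot q)$ for all $q\in Q$. The shape space is $S=Q/G$ (dimension $r$), with projection $\pi:Q\to S$. For $v\in T_{\pi(q)}S$, the horizontal lift $\mathrm{hor}_q(v)$ is the unique vector in $\mathcal D_q$ with $T_q\pi(\mathrm{hor}_q(v))=v$. In local coordinates $(s^1,\dots,s^r)$ on $S$, put $K_{ij}(s)=\langle\mathrm{hor}_q(\partial_{s^i}),\mathrm{hor}_q(\partial_{s^j})\rangle_q$ ($q\in\pi^{-1}(s)$), with inverse matrix $K^{ij}$; $U$ also denotes the induced function on $S$. The reduced Hamiltonian on $T^*S$ (canonical coordinates $(s,p)$) is $H(s,p)=\tfrac12\sum_{i,j}K^{ij}(s)p_ip_j+U(s)$. The gyroscopic coefficients are $C_{ij}^k(s)=\sum_{l}K^{kl}(s)\langle[\mathrm{hor}_q(\partial_{s^i}),\mathrm{hor}_q(\partial_{s^j})],\mathrm{hor}_q(\partial_{s^l})\rangle_q$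 ($[\cdot,\cdot]$ the Lie bracket of vector fields on $Q$; independent of $q\in\pi^{-1}(s)$); they satisfy $C_{ij}^k=-C_{ji}^k$ and are the components of a $(1,2)$ tensor field $\mathcal T=\sum C_{ij}^k\,ds^i\otimes ds^j\otimes\partial_{s^k}$ on $S$. The reduced equations of motion on $T^*S$ are $\frac{ds^i}{dt}=\frac{\partial H}{\partial p_i}$, $\frac{dp_i}{dt}=-\frac{\partial H}{\partial s^i}-\sum_{j,k}C_{ij}^kp_k\frac{\partial H}{\partial p_j}$, $i=1,\dots,r$. The Liouville volume on $T^*S$ is $\nu=ds^1\cdots ds^r\,dp_1\cdots dp_r$. Hypothesis (H): $C_{ij}^k=0$ whenever $i,j,k$ are pairwise distinct, and $C_{ij}^j=C_{ik}^k$ for all $j,k\neq i$. *)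

(* Defs.v *)
From Stdlib Require Import Reals ClassicalEpsilon.
From mathcomp Require Import all_boot.

Set Implicit Arguments.
Unset Strict Implicit.
Unset Printing Implicit Defensive.

Local Open Scope R_scope.

(* Points of a coordinate chart of the shape space S (dimension r) and
   fibre coordinates of T*S are vectors 'I_r -> R. *)
Definition vec (r : nat) := 'I_r -> R.

Definition sumR (r : nat) (F : 'I_r -> R) : R := \big[Rplus/0]_(i < r) F i.

Definition shift (r : nat) (x : vec r) (i : 'I_r) (h : R) : vec r :=
  fun j => if j == i then x j + h else x j.

(* partial derivative d g / d x^i at x (the derivative of h |-> g(x + h e_i)
   at 0, chosen classically; it is the true partial derivative whenever
   that exists) *)
Definition dpart (r : nat) (g : vec r -> R) (i : 'I_r) (x : vec r) : R :=
  epsilon (inhabits 0) (fun l => derivable_pt_lim (fun h => g (shift x i h)) 0 l).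

Definition dS (r : nat) (g : vec r -> vec r -> R) (i : 'I_r) (s p : vec r) : R :=
  dpart (fun s' => g s' p) i s.
Definition dP (r : nat) (g : vec r -> vec r -> R) (i : 'I_r) (s p : vec r) : R :=
  dpart (fun p' => g s p') i p.

Definition open_chart (r : nat) (O : vec r -> Prop) : Prop :=
  forall x, O x -> exists d, 0 < d /\
    forall y : vec r, (forall i, Rabs (y i - x i) < d) -> O y.

Definition cont_on (r : nat) (O : vec r -> Prop) (g : vec r -> R) : Prop :=
  forall x, O x -> forall e, 0 < e -> exists d, 0 < d /\
    forall y : vec r, (forall i, Rabs (y i - x i) < d) -> Rabs (g y - g x) < e.

Fixpoint Ck (r : nat) (n : nat) (O : vec r -> Prop) (g : vec r -> R) : Prop :=
  cont_on O g /\
  match n with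
  | 0 => True
  | S m => forall i : 'I_r,
      (forall x, O x -> exists l, derivable_pt_lim (fun h => g (shift x i h)) 0 l)
      /\ Ck m O (dpart g i)
  end.

Definition smooth_on (r : nat) (O : vec r -> Prop) (g : vec r -> R) : Prop :=
  forall n, Ck n O g.

Definition redH (r : nat) (Kinv : 'I_r -> 'I_r -> vec r -> R) (U : vec r -> R)
  (s p : vec r) : R :=
  / 2 * sumR (fun i => sumR (fun j => Kinv i j s * p i * p j)) + U s.

Definition Xs (r : nat) (H : vec r -> vec r -> R) (i : 'I_r) (s p : vec r) : R :=
  dP H i s p.
Definition Xp (r : nat) (H : vec r -> vec r -> R)
  (C : 'I_r -> 'I_r -> 'I_r -> vec r -> R) (i : 'I_r) (s p : vec r) : R :=
  - dS H i s p - sumR (fun j => sumR (fun k => C i j k s * p k * dP H j s p)).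

(* The reduced equations preserve the measure exp(sigma(s)) ds dp on the
   chart domain O x R^r: the vector field has zero divergence with respect
   to this measure, i.e. div(exp(sigma) X) = 0 in the coordinates (s,p). *)
Definition preserves_measure (r : nat) (O : vec r -> Prop)
  (H : vec r -> vec r -> R) (C : 'I_r -> 'I_r -> 'I_r -> vec r -> R)
  (sigma : vec r -> R) : Prop :=
  forall s p, O s ->
    sumR (fun i => dS (fun s' p' => exp (sigma s') * Xs H i s' p') i s p)
  + sumR (fun i => dP (fun s' p' => exp (sigma s') * Xp H C i s' p') i s p) = 0.

Definition hypH (r : nat) (O : vec r -> Prop)
  (C : 'I_r -> 'I_r -> 'I_r -> vec r -> R) : Prop :=
  forall s, O s ->
    (forall i j k : 'I_r, i != j -> j != k -> i != k -> C i j k s = 0) /\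
    (forall i j k : 'I_r, j != i -> k != i -> C i j j s = C i k k s).

(* Main.v *)
Require Import Defs.
From Stdlib Require Import Reals ClassicalEpsilon FunctionalExtensionality Lra.
From HB Require Import structures.
From mathcomp Require Import all_boot.
Local Open Scope R_scope.
Set Implicit Arguments.

HB.instance Definition _ := Monoid.isComLaw.Build R 0 Rplus (fun a b c => esym (Rplus_assoc a b c)) Rplus_comm Rplus_0_l.
HB.instance Definition _ := Monoid.isComLaw.Build R 1 Rmult (fun a b c => esym (Rmult_assoc a b c)) Rmult_comm Rmult_1_l.
HB.instance Definition _ := Monoid.isMulLaw.Build R 0 Rmult Rmult_0_l Rmult_0_r.
HB.instance Definition _ := Monoid.isAddLaw.Build R Rmult Rplus Rmult_plus_distr_r Rmult_plus_distr_l.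

Lemma sumR_split r (F G : 'I_r -> R) : sumR (fun i => F i + G i) = sumR F + sumR G.
Proof. by rewrite /sumR big_split. Qed.
Lemma sumR_distr r c (F : 'I_r -> R) : c * sumR F = sumR (fun i => c * F i).
Proof. by rewrite /sumR big_distrr. Qed.
Lemma sumR_distl r c (F : 'I_r -> R) : sumR F * c = sumR (fun i => F i * c).
Proof. by rewrite /sumR big_distrl. Qed.
Lemma sumR_ext r (F G : 'I_r -> R) : (forall i, F i = G i) -> sumR F = sumR G.
Proof. by move=> h; rewrite /sumR; apply: eq_bigr => i _. Qed.
Lemma sumR_exch r (F : 'I_r -> 'I_r -> R) :
  sumR (fun i => sumR (fun j => F i j)) = sumR (fun j => sumR (fun i => F i j)).
Proof. by rewrite /sumR exchange_big. Qed.
Lemma sumR_0 r : sumR (fun _ : 'I_r => 0) = 0.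
Proof. by rewrite /sumR big1. Qed.
Lemma sumR_opp r (F : 'I_r -> R) : sumR (fun i => - F i) = - sumR F.
Proof.
have := @sumR_distr r (-1) F; rewrite -Ropp_mult_distr_l Rmult_1_l => ->.
by apply: sumR_ext => i; ring.
Qed.
Lemma sumR_delta r (i : 'I_r) (F : 'I_r -> R) :
  sumR (fun k => if k == i then F k else 0) = F i.
Proof. by rewrite /sumR -big_mkcond big_pred1_eq. Qed.
Lemma sumR_const r c : sumR (fun _ : 'I_r => c) = INR r * c.
Proof.
rewrite /sumR; elim: r => [|r IH]; first by rewrite big_ord0 /=; ring.
rewrite big_ord_recr /= IH; change (INR r * c + c = INR (S r) * c); rewrite S_INR; ring.
Qed.

Lemma d_ext f g x l : (forall h, f h = g h) -> derivable_pt_lim f x l -> derivable_pt_lim g x l.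
Proof. by move=> e; have -> : f = g by apply: functional_extensionality. Qed.
Arguments d_ext {f g x l}.
Lemma d_eq f x l l' : derivable_pt_lim f x l -> l = l' -> derivable_pt_lim f x l'.
Proof. by move=> ? <-. Qed.
Lemma d_plus f g x a b : derivable_pt_lim f x a -> derivable_pt_lim g x b ->
  derivable_pt_lim (fun y => f y + g y) x (a + b).
Proof. exact: derivable_pt_lim_plus. Qed.
Lemma d_minus f g x a b : derivable_pt_lim f x a -> derivable_pt_lim g x b ->
  derivable_pt_lim (fun y => f y - g y) x (a - b).
Proof. exact: derivable_pt_lim_minus. Qed.
Lemma d_mult f g x a b : derivable_pt_lim f x a -> derivable_pt_lim g x b ->
  derivable_pt_lim (fun y => f y * g y) x (a * g x + f x * b).
Proof. exact: derivable_pt_lim_mult. Qed.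
Lemma d_const c x : derivable_pt_lim (fun _ => c) x 0.
Proof. exact: derivable_pt_lim_const. Qed.
Lemma d_id x : derivable_pt_lim (fun y => y) x 1.
Proof. exact: derivable_pt_lim_id. Qed.
Lemma d_opp f x a : derivable_pt_lim f x a -> derivable_pt_lim (fun y => - f y) x (- a).
Proof. exact: derivable_pt_lim_opp. Qed.
Lemma d_comp f g x a b : derivable_pt_lim f x a -> derivable_pt_lim g (f x) b ->
  derivable_pt_lim (fun y => g (f y)) x (b * a).
Proof. exact: derivable_pt_lim_comp. Qed.
Lemma d_div f g x a b : derivable_pt_lim f x a -> derivable_pt_lim g x b -> g x <> 0 ->
  derivable_pt_lim (fun y => f y / g y) x ((a * g x - b * f x) / (g x)²).
Proof. exact: derivable_pt_lim_div. Qed.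

Lemma d_sum r (F : 'I_r -> R -> R) l x :
  (forall k, derivable_pt_lim (F k) x (l k)) ->
  derivable_pt_lim (fun y => sumR (fun k => F k y)) x (sumR l).
Proof.
move=> H; rewrite /sumR.
have gen : forall (s : seq 'I_r),
  derivable_pt_lim (fun y => \big[Rplus/0]_(k <- s) F k y) x (\big[Rplus/0]_(k <- s) l k).
  elim=> [|a s IH].
    rewrite big_nil; apply: (d_ext (f := fun _ => 0)); first by move=> h; rewrite big_nil.
    exact: d_const.
  rewrite big_cons; apply: (d_ext (f := fun y => F a y + \big[Rplus/0]_(k <- s) F k y)).
    by move=> h; rewrite big_cons.
  exact: d_plus.
exact: gen.
Qed.

Lemma dpart_eq r (g : vec r -> R) i x l :
  derivable_pt_lim (fun h => g (shift x i h)) 0 l -> dpart g i x = l.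
Proof.
move=> H; rewrite /dpart.
have ex : exists l, derivable_pt_lim (fun h => g (shift x i h)) 0 l by exists l.
have := epsilon_spec (inhabits 0) _ ex.
move=> H2; exact: (uniqueness_limite _ _ _ _ H2 H).
Qed.

Lemma shift0 r (x : vec r) i : shift x i 0 = x.
Proof. apply: functional_extensionality => j; rewrite /shift; case: (j == i) => //; ring. Qed.

Definition E r (i a : 'I_r) : R := if a == i then 1 else 0.

Lemma shiftE r (x : vec r) i h : shift x i h = (fun a => x a + h * E i a).
Proof. apply: functional_extensionality => a; rewrite /shift /E; case: (a == i); ring. Qed.

Lemma smooth_d r (Om : vec r -> Prop) g x i : smooth_on Om g -> Om x ->
  derivable_pt_lim (fun h => g (shift x i h)) 0 (dpart g i x).
Proof.
move=> Hs Ox; have [_ H1] := Hs 1%N; have [Hex _] := H1 i; have [l Hl] := Hex x Ox.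
by rewrite (@dpart_eq _ g i x l Hl).
Qed.
Arguments smooth_d {r Om g} x i.

Lemma smooth_cont r (Om : vec r -> Prop) g i : smooth_on Om g -> cont_on Om (dpart g i).
Proof. move=> Hs; have [_ H1] := Hs 1%N; by have [_ [H _]] := H1 i. Qed.

Lemma d_shiftc F c l : derivable_pt_lim (fun h => F (c + h)) 0 l -> derivable_pt_lim F c l.
Proof.
move=> H eps Heps; have [del Hd] := H eps Heps; exists del => h h0 hh.
have := Hd h h0 hh; by rewrite Rplus_0_l Rplus_0_r.
Qed.

Lemma deriv_cont f x l : derivable_pt_lim f x l ->
  forall e, 0 < e -> exists eta, 0 < eta /\ forall h, Rabs h < eta -> Rabs (f (x + h) - f x) < e.
Proof.
move=> H e He; have [del Hd] := H 1 Rlt_0_1.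
have Hl : 0 < Rabs l + 1 by have := Rabs_pos l; lra.
exists (Rmin del (e / (Rabs l + 1))); split.
  apply: Rmin_pos; first exact: cond_pos.
  apply: Rdiv_lt_0_compat => //.
move=> h hh.
have hd : Rabs h < del by apply: (Rlt_le_trans _ _ _ hh); apply: Rmin_l.
have he : Rabs h < e / (Rabs l + 1) by apply: (Rlt_le_trans _ _ _ hh); apply: Rmin_r.
case: (Req_dec h 0) => [->|h0].
  by rewrite Rplus_0_r Rminus_diag Rabs_R0.
have := Hd h h0 hd; set q := (f (x + h) - f x) / h => Hq.
have -> : f (x + h) - f x = q * h by rewrite /q; field.
rewrite Rabs_mult.
have Hq2 : Rabs q <= Rabs l + 1.
  have -> : q = (q - l) + l by ring.
  have := Rabs_triang (q - l) l; lra.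
have : Rabs h * (Rabs l + 1) < e.
  have := Rmult_lt_compat_r (Rabs l + 1) _ _ Hl he.
  by rewrite /Rdiv Rmult_assoc Rinv_l ?Rmult_1_r; lra.
have := Rabs_pos h; have := Rabs_pos q; nra.
Qed.

Lemma deriv_approx D dl u0 A d : D u0 = 0 -> dl u0 = 0 -> derivable_pt_lim dl u0 d ->
  (forall e, 0 < e -> exists eta, 0 < eta /\ forall h, Rabs h < eta ->
      Rabs (D (u0 + h) - A * dl (u0 + h)) <= e * Rabs (dl (u0 + h))) ->
  derivable_pt_lim D u0 (A * d).
Proof.
move=> D0 dl0 Hdl Happ eps Heps.
have HA : 0 < Rabs A + 1 by have := Rabs_pos A; lra.
have Hd : 0 < Rabs d + 1 by have := Rabs_pos d; lra.
set e1 := Rmin 1 (eps / (2 * (Rabs A + 1))).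
have e1p : 0 < e1 by apply: Rmin_pos; [lra | apply: Rdiv_lt_0_compat; lra].
have e1le : e1 * (Rabs A + 1) <= eps / 2.
  have : e1 <= eps / (2 * (Rabs A + 1)) by apply: Rmin_r.
  move=> h1; have := Rmult_le_compat_r (Rabs A + 1) _ _ (Rlt_le _ _ HA) h1.
  have -> : eps / (2 * (Rabs A + 1)) * (Rabs A + 1) = eps / 2 by field; lra.
  done.
have e1le1 : e1 <= 1 by apply: Rmin_l.
set e2 := eps / (2 * (Rabs d + 2)).
have e2p : 0 < e2 by apply: Rdiv_lt_0_compat; have := Rabs_pos d; lra.
have e2le : e2 * (Rabs d + 1) < eps / 2.
  rewrite /e2; have -> : eps / (2 * (Rabs d + 2)) * (Rabs d + 1) = eps / 2 * ((Rabs d + 1) / (Rabs d + 2)) by field; have := Rabs_pos d; lra.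
  have : (Rabs d + 1) / (Rabs d + 2) < 1.
    apply/(Rmult_lt_reg_r (Rabs d + 2)); first by have := Rabs_pos d; lra.
    rewrite /Rdiv Rmult_assoc Rinv_l; last by have := Rabs_pos d; lra.
    lra.
  move=> h1; nra.
have [del1 Hdel1] := Hdl e1 e1p.
have [eta [etap Heta]] := Happ e2 e2p.
have dp : 0 < Rmin del1 eta by apply: Rmin_pos => //; exact: cond_pos.
exists (mkposreal _ dp) => h h0 /= hh.
have hd : Rabs h < del1 by apply: (Rlt_le_trans _ _ _ hh); apply: Rmin_l.
have he : Rabs h < eta by apply: (Rlt_le_trans _ _ _ hh); apply: Rmin_r.
have Hq := Hdel1 h h0 hd; rewrite dl0 Rminus_0_r in Hq.
have Ha := Heta h he.
rewrite D0 Rminus_0_r.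
set q := dl (u0 + h) / h in Hq.
have Hq2 : Rabs q <= Rabs d + 1.
  have -> : q = (q - d) + d by ring.
  have := Rabs_triang (q - d) d; lra.
have eq1 : D (u0 + h) / h - A * d = (D (u0 + h) - A * dl (u0 + h)) / h + A * (q - d).
  by rewrite /q; field.
rewrite eq1.
have t1 : Rabs ((D (u0 + h) - A * dl (u0 + h)) / h) <= e2 * Rabs q.
  rewrite /q /Rdiv !Rabs_mult.
  have hp : 0 < Rabs (/ h) by apply: Rabs_pos_lt; apply: Rinv_neq_0_compat.
  have := Rmult_le_compat_r _ _ _ (Rlt_le _ _ hp) Ha; lra.
have t2 : Rabs (A * (q - d)) <= Rabs A * e1.
  rewrite Rabs_mult; apply: Rmult_le_compat_l; [exact: Rabs_pos | lra].
have := Rabs_triang ((D (u0 + h) - A * dl (u0 + h)) / h) (A * (q - d)).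
have := Rabs_pos q; have := Rabs_pos A; nra.
Qed.

Lemma fin_min n (P : 'I_n -> R -> Prop) :
  (forall k e e', 0 < e' <= e -> P k e -> P k e') ->
  (forall k, exists e, 0 < e /\ P k e) -> exists e, 0 < e /\ forall k, P k e.
Proof.
move=> mono ex.
suff: forall m, exists e, 0 < e /\ forall k : 'I_n, (k < m)%N -> P k e.
  by move=> /(_ n) [e [ep He]]; exists e; split => // k; apply: He.
elim=> [|m [e [ep IH]]]; first by exists 1; split => //; lra.
case: (ltnP m n) => mn.
  have [e0 [e0p He0]] := ex (Ordinal mn).
  exists (Rmin e e0); split; first exact: Rmin_pos.
  move=> k; rewrite ltnS leq_eqVlt => /orP [/eqP km|km].
    have -> : k = Ordinal mn by apply: val_inj.
    apply: (mono _ e0) => //; split; [exact: Rmin_pos|exact: Rmin_r].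
  apply: (mono _ e); last exact: IH.
  split; [exact: Rmin_pos|exact: Rmin_l].
exists e; split => // k km; apply: IH.
by apply: (leq_trans (ltn_ord k)).
Qed.

Section Chain.
Variables (r : nat) (Om : vec r -> Prop) (hO : open_chart Om) (g : vec r -> R)
  (hg : smooth_on Om g) (x : R -> vec r) (u0 : R) (dx : vec r)
  (Ox : Om (x u0)) (hx : forall k, derivable_pt_lim (fun u => x u k) u0 (dx k)).

Let y m u := fun k : 'I_r => if (k < m)%N then x u k else x u0 k.

Lemma chain_step m (M : 'I_r) (hM : nat_of_ord M = m) :
  derivable_pt_lim (fun u => g (shift (y m u) M (x u M - x u0 M)) - g (y m u)) u0
    (dpart g M (x u0) * dx M).
Proof.
apply: (@deriv_approx _ (fun u => x u M - x u0 M)).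

- rewrite /= Rminus_diag shift0; ring.
- by rewrite /= Rminus_diag.
- apply: (d_eq (d_minus (hx M) (d_const _ _))); ring.
move=> e ep.
have [d0 [d0p Hbox]] := hO Ox.
have [d1 [d1p Hc]] := smooth_cont M hg (x u0) Ox ep.
set dd := Rmin d0 d1.
have ddp : 0 < dd by apply: Rmin_pos.
have [eta [etap Heta]] := @fin_min r
   (fun k eta => forall h, Rabs h < eta -> Rabs (x (u0 + h) k - x u0 k) < dd)
   ltac:(move=> k a b [bp ba] H h hh; apply: H; lra)
   ltac:(move=> k; exact: (deriv_cont (hx k) ddp)).
exists eta; split => // h hh.
set u := u0 + h.
set dl := x u M - x u0 M.
set Y := y m u.
have YM : Y M = x u0 M by rewrite /Y /y hM ltnn.
have inbox : forall t, Rabs t <= Rabs dl ->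
   Om (shift Y M t) /\ Rabs (dpart g M (shift Y M t) - dpart g M (x u0)) < e.
  move=> t ht.
  have B : forall k, Rabs (shift Y M t k - x u0 k) < dd.
    move=> k; rewrite /shift; case: eqP => [->|kM].
      rewrite YM; have -> : x u0 M + t - x u0 M = t by ring.
      by apply: (Rle_lt_trans _ _ _ ht); apply: Heta.
    rewrite /Y /y; case: (k < m)%N; first exact: Heta.
    by rewrite Rminus_diag Rabs_R0.
  split.
    apply: Hbox => k; apply: (Rlt_le_trans _ _ _ (B k)); apply: Rmin_l.
  apply: Hc => k; apply: (Rlt_le_trans _ _ _ (B k)); apply: Rmin_r.
have der : forall t, Rabs t <= Rabs dl ->
   derivable_pt_lim (fun t => g (shift Y M t)) t (dpart g M (shift Y M t)).
  move=> t ht; apply: d_shiftc.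
  have [Oz _] := inbox t ht.
  apply: (d_ext _ (smooth_d _ M hg Oz)) => h0.
  congr g; apply: functional_extensionality => k; rewrite /shift.
  case: (k == M) => //; ring.
have gen : forall c, Rabs c <= Rabs dl ->
   Rabs (dpart g M (shift Y M c) * dl - dpart g M (x u0) * dl) <= e * Rabs dl.
  move=> c hc; have [_ H] := inbox c hc.
  have -> : dpart g M (shift Y M c) * dl - dpart g M (x u0) * dl
     = (dpart g M (shift Y M c) - dpart g M (x u0)) * dl by ring.
  rewrite Rabs_mult; apply: Rmult_le_compat_r; [exact: Rabs_pos | lra].
have Y0 : g (shift Y M 0) = g Y by rewrite shift0.
case: (Rtotal_order dl 0) => [dn|[dz|dpos]].
- have [c [Hc1 Hc2]] := MVT_cor2 (fun t => g (shift Y M t))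
     (fun t => dpart g M (shift Y M t)) dl 0 dn
     ltac:(move=> c hc; apply: der; rewrite (Rabs_left dl dn); unfold Rabs; case: Rcase_abs; lra).
  rewrite Y0 in Hc1.
  have -> : g (shift Y M dl) - g Y = dpart g M (shift Y M c) * dl by lra.
  apply: gen; rewrite (Rabs_left dl dn); unfold Rabs; case: Rcase_abs; lra.
- rewrite dz shift0 Rminus_diag Rmult_0_r Rminus_0_r Rabs_R0; lra.
- have [c [Hc1 Hc2]] := MVT_cor2 (fun t => g (shift Y M t))
     (fun t => dpart g M (shift Y M t)) 0 dl dpos
     ltac:(move=> c hc; apply: der; rewrite (Rabs_right dl); last lra; unfold Rabs; case: Rcase_abs; lra).
  rewrite Y0 in Hc1.
  have -> : g (shift Y M dl) - g Y = dpart g M (shift Y M c) * dl by lra.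
  apply: gen; rewrite (Rabs_right dl); last lra; unfold Rabs; case: Rcase_abs; lra.
Qed.

Lemma chain_all m : (m <= r)%N ->
  derivable_pt_lim (fun u => g (y m u)) u0
    (sumR (fun k : 'I_r => if (k < m)%N then dpart g k (x u0) * dx k else 0)).
Proof.
elim: m => [|m IH] hm.
  rewrite sumR_0; apply: (d_ext (f := fun _ => g (x u0))); last exact: d_const.
  by move=> h; congr g; apply: functional_extensionality => k; rewrite /y.
have mr : (m < r)%N by [].
set M := Ordinal mr.
have e1 : forall u, g (y m.+1 u) = g (y m u) +
     (g (shift (y m u) M (x u M - x u0 M)) - g (y m u)).
  move=> u; have -> : y m.+1 u = shift (y m u) M (x u M - x u0 M).
    apply: functional_extensionality => k; rewrite /shift /y.
    case: eqP => [->|kM] /=; first by rewrite ltnn ltnSn; ring.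
    rewrite ltnS leq_eqVlt; case: eqP => // km.
    by exfalso; apply: kM; apply: val_inj.
  ring.
have H := d_plus (IH (ltnW hm)) (chain_step M (erefl _)).
have H2 := d_ext (g := fun u => g (y m.+1 u)) (fun h => esym (e1 h)) H.
apply: (d_eq H2).
rewrite -(sumR_delta M (fun k => dpart g k (x u0) * dx k)) -sumR_split.
apply: sumR_ext => k.
case: (boolP (k == M)) => [/eqP ->|kM].
  by rewrite /= ltnSn ltnn; ring.
have km : (k : nat) != m by apply: contra kM => /eqP km; apply/eqP/val_inj.
rewrite ltnS (leq_eqVlt k m) (negbTE km) /=.
case: (k < m)%N; ring.
Qed.

Lemma chain : derivable_pt_lim (fun u => g (x u)) u0 (sumR (fun k => dpart g k (x u0) * dx k)).
Proof.
have := @chain_all r (leqnn r).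
have -> : (fun u => g (y r u)) = (fun u => g (x u)).
  apply: functional_extensionality => u; congr g; apply: functional_extensionality => k.
  by rewrite /y ltn_ord.
move=> H; apply: (d_eq H); apply: sumR_ext => k; by rewrite ltn_ord.
Qed.
End Chain.

Lemma dlin c d x : derivable_pt_lim (fun h => c + h * d) x d.
Proof. apply: (d_eq (d_plus (d_const c x) (d_mult (d_id x) (d_const d x)))); ring. Qed.

Lemma quad r (A : 'I_r -> 'I_r -> R) (P D : vec r) :
  derivable_pt_lim (fun h => sumR (fun a => sumR (fun b => A a b * (P a + h * D a) * (P b + h * D b)))) 0
    (sumR (fun a => sumR (fun b => A a b * (D a * P b + P a * D b)))).
Proof.
apply: (d_sum (fun a h => sumR (fun b => A a b * (P a + h * D a) * (P b + h * D b)))) => a.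
apply: (d_sum (fun b h => A a b * (P a + h * D a) * (P b + h * D b))) => b.
apply: (d_eq (d_mult (d_mult (d_const (A a b) 0) (dlin (P a) (D a) 0)) (dlin (P b) (D b) 0))).
ring.
Qed.

Definition Vf r (K : 'I_r -> 'I_r -> vec r -> R) (j : 'I_r) (s p : vec r) : R :=
  / 2 * sumR (fun a => sumR (fun b => K a b s * (E j a * p b + p a * E j b))).

Definition Wf r (K : 'I_r -> 'I_r -> vec r -> R) (U : vec r -> R) (i : 'I_r) (s p : vec r) : R :=
  / 2 * sumR (fun a => sumR (fun b => dpart (K a b) i s * p a * p b)) + dpart U i s.

Lemma dP_redH r (K : 'I_r -> 'I_r -> vec r -> R) U j s p : dP (redH K U) j s p = Vf K j s p.
Proof.
rewrite /dP; apply: dpart_eq.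
have Q := quad (fun a b => K a b s) p (E j).
have H := d_plus (d_mult (d_const (/2) 0) Q) (d_const (U s) 0).
apply: (d_eq (d_ext (g := fun h => redH K U s (shift p j h)) _ H)).
  by move=> h; rewrite shiftE /redH.
rewrite /Vf; ring_simplify; congr (_ * _); apply: sumR_ext => a; apply: sumR_ext => b; ring.
Qed.

Lemma dS_redH r (Om : vec r -> Prop) (K : 'I_r -> 'I_r -> vec r -> R) U i s p :
  (forall a b, smooth_on Om (K a b)) -> smooth_on Om U -> Om s ->
  dS (redH K U) i s p = Wf K U i s p.
Proof.
move=> hK hU Os; rewrite /dS; apply: dpart_eq.
have Q : derivable_pt_lim (fun h => sumR (fun a => sumR (fun b => K a b (shift s i h) * p a * p b))) 0
   (sumR (fun a => sumR (fun b => dpart (K a b) i s * p a * p b))).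
  apply: (d_sum (fun a h => sumR (fun b => K a b (shift s i h) * p a * p b))) => a.
  apply: (d_sum (fun b h => K a b (shift s i h) * p a * p b)) => b.
  apply: (d_eq (d_mult (d_mult (smooth_d s i (hK a b) Os) (d_const (p a) 0)) (d_const (p b) 0))).
  ring.
apply: (d_eq (d_plus (d_mult (d_const (/2) 0) Q) (smooth_d s i hU Os))).
rewrite /Wf; ring.
Qed.

Lemma sumR_Er r (i : 'I_r) (F : 'I_r -> R) : sumR (fun k => F k * E i k) = F i.
Proof.
rewrite -(sumR_delta i F); apply: sumR_ext => k; rewrite /E; case: (k == i); ring.
Qed.
Lemma sumR_El r (i : 'I_r) (F : 'I_r -> R) : sumR (fun k => E i k * F k) = F i.
Proof.
rewrite -(sumR_delta i F); apply: sumR_ext => k; rewrite /E; case: (k == i); ring.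
Qed.

Lemma Vsym r (K : 'I_r -> 'I_r -> vec r -> R) j s p :
  (forall a b, K a b s = K b a s) -> Vf K j s p = sumR (fun b => K j b s * p b).
Proof.
move=> hs; rewrite /Vf.
have -> : sumR (fun a => sumR (fun b => K a b s * (E j a * p b + p a * E j b)))
  = sumR (fun a => E j a * sumR (fun b => K a b s * p b))
    + sumR (fun b => E j b * sumR (fun a => K a b s * p a)).
  have -> : sumR (fun a => sumR (fun b => K a b s * (E j a * p b + p a * E j b)))
    = sumR (fun a => sumR (fun b => E j a * (K a b s * p b)))
      + sumR (fun a => sumR (fun b => E j b * (K a b s * p a))).
    rewrite -sumR_split; apply: sumR_ext => a; rewrite -sumR_split.
    apply: sumR_ext => b; ring.
  congr (_ + _).
    by apply: sumR_ext => a; rewrite sumR_distr.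
  rewrite sumR_exch; apply: sumR_ext => b; by rewrite sumR_distr.
rewrite sumR_El sumR_El.
have -> : sumR (fun a => K a j s * p a) = sumR (fun b => K j b s * p b).
  by apply: sumR_ext => a; rewrite hs.
field.
Qed.

Lemma sumR_sub r (F G : 'I_r -> R) : sumR (fun i => F i - G i) = sumR F - sumR G.
Proof.
rewrite /Rminus sumR_split; congr (_ + _); exact: sumR_opp.
Qed.

Lemma d_mulc f x a c : derivable_pt_lim f x a -> derivable_pt_lim (fun y => f y * c) x (a * c).
Proof. move=> H; apply: (d_eq (d_mult H (d_const c x))); ring. Qed.
Lemma d_cmul f x a c : derivable_pt_lim f x a -> derivable_pt_lim (fun y => c * f y) x (c * a).
Proof. move=> H; apply: (d_eq (d_mult (d_const c x) H)); ring. Qed.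

Section Meas.
Variables (r : nat) (Om : vec r -> Prop) (K : 'I_r -> 'I_r -> vec r -> R) (U : vec r -> R)
  (C : 'I_r -> 'I_r -> 'I_r -> vec r -> R) (sigma : vec r -> R)
  (hK : forall a b, smooth_on Om (K a b)) (hU : smooth_on Om U) (hsig : smooth_on Om sigma)
  (s0 : vec r) (Os0 : Om s0)
  (hskew : forall i j k, C i j k s0 = - C j i k s0)
  (hsym : forall a b, K a b s0 = K b a s0)
  (hpos : forall p : vec r, (exists i, p i <> 0) ->
              0 < sumR (fun i => sumR (fun j => K i j s0 * p i * p j)))
  (hmeas : preserves_measure Om (redH K U) C sigma).

Let DV i (p : vec r) := / 2 * sumR (fun a => sumR (fun b => dpart (K a b) i s0 * (E i a * p b + p a * E i b))).
Let Mm j i := / 2 * sumR (fun a => sumR (fun b => K a b s0 * (E j a * E i b + E i a * E j b))).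

Lemma dexp_sig i : derivable_pt_lim (fun h => exp (sigma (shift s0 i h))) 0 (exp (sigma s0) * dpart sigma i s0).
Proof.
have H := d_comp (smooth_d s0 i hsig Os0) (derivable_pt_lim_exp _).
by rewrite shift0 in H.
Qed.

Lemma T1_eq i p : dS (fun s' p' => exp (sigma s') * Xs (redH K U) i s' p') i s0 p
  = exp (sigma s0) * dpart sigma i s0 * Vf K i s0 p + exp (sigma s0) * DV i p.
Proof.
rewrite /dS; apply: dpart_eq.
have HV : derivable_pt_lim (fun h => Vf K i (shift s0 i h) p) 0 (DV i p).
  rewrite /Vf /DV.
  have H := d_sum (fun a h => sumR (fun b => K a b (shift s0 i h) * (E i a * p b + p a * E i b)))
    (fun a => sumR (fun b => dpart (K a b) i s0 * (E i a * p b + p a * E i b)))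
    (fun a => d_sum (fun b h => K a b (shift s0 i h) * (E i a * p b + p a * E i b)) _
       (fun b => d_mulc (E i a * p b + p a * E i b) (smooth_d s0 i (hK a b) Os0))).
  exact: (d_cmul (/2) H).
have H := d_mult (dexp_sig i) HV.
rewrite shift0 in H.
apply: (d_eq (d_ext _ H)).
  by move=> h; rewrite /Xs dP_redH.
ring.
Qed.

Lemma padd0 (p D : vec r) : (fun a => p a + 0 * D a) = p.
Proof. apply: functional_extensionality => a; ring. Qed.

Lemma T2_eq i p : dP (fun s' p' => exp (sigma s') * Xp (redH K U) C i s' p') i s0 p
  = exp (sigma s0) * (- DV i p - sumR (fun j => sumR (fun k =>
        C i j k s0 * E i k * Vf K j s0 p + C i j k s0 * p k * Mm j i))).
Proof.
rewrite /dP; apply: dpart_eq.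
have HW : derivable_pt_lim (fun h => Wf K U i s0 (fun a => p a + h * E i a)) 0 (DV i p).
  apply: (d_eq (d_plus (d_cmul (/2) (quad (fun a b => dpart (K a b) i s0) p (E i))) (d_const (dpart U i s0) 0))).
  rewrite /DV; ring.
have HV : forall j, derivable_pt_lim (fun h => Vf K j s0 (fun a => p a + h * E i a)) 0 (Mm j i).
  move=> j; rewrite /Vf /Mm; apply: d_cmul.
  apply: (d_sum (fun a h => sumR (fun b => K a b s0 * (E j a * (p b + h * E i b) + (p a + h * E i a) * E j b))))
    => a.
  apply: (d_sum (fun b h => K a b s0 * (E j a * (p b + h * E i b) + (p a + h * E i a) * E j b))) => b.
  apply: d_cmul.
  exact: (d_plus (d_cmul (E j a) (dlin (p b) (E i b) 0)) (d_mulc (E j b) (dlin (p a) (E i a) 0))).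
have Ht : forall j k, derivable_pt_lim (fun h => C i j k s0 * (p k + h * E i k) * Vf K j s0 (fun a => p a + h * E i a)) 0
     (C i j k s0 * E i k * Vf K j s0 p + C i j k s0 * p k * Mm j i).
  move=> j k.
  have H := d_mult (d_cmul (C i j k s0) (dlin (p k) (E i k) 0)) (HV j).
  rewrite padd0 in H; apply: (d_eq H); ring.
have HS := d_sum (fun j h => sumR (fun k => C i j k s0 * (p k + h * E i k) * Vf K j s0 (fun a => p a + h * E i a))) _
   (fun j => d_sum (fun k h => C i j k s0 * (p k + h * E i k) * Vf K j s0 (fun a => p a + h * E i a)) _ (Ht j)).
have H := d_cmul (exp (sigma s0)) (d_minus (d_opp HW) HS).
apply: (d_eq (d_ext _ H)); last by [].
move=> h; rewrite shiftE /Xp (@dS_redH r Om K U i s0 _ hK hU Os0).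
congr (_ * (- _ - _)); apply: sumR_ext => j; apply: sumR_ext => k; by rewrite dP_redH.
Qed.

Lemma T_zero p : sumR (fun i => sumR (fun j => sumR (fun k => C i j k s0 * p k * Mm j i))) = 0.
Proof.
set G := fun i j => sumR (fun k => C i j k s0 * p k).
have e1 : sumR (fun i => sumR (fun j => sumR (fun k => C i j k s0 * p k * Mm j i)))
   = sumR (fun i => sumR (fun j => G i j * Mm j i)).
  apply: sumR_ext => i; apply: sumR_ext => j; by rewrite /G sumR_distl.
have Msym : forall i j, Mm j i = Mm i j.
  move=> i j; rewrite /Mm; congr (_ * _); apply: sumR_ext => a; apply: sumR_ext => b; ring.
have Gs : forall i j, G i j = - G j i.
  move=> i j; rewrite /G -sumR_opp; apply: sumR_ext => k; rewrite hskew; ring.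
rewrite e1.
set T := sumR (fun i => sumR (fun j => G i j * Mm j i)).
have : T = - T.
  rewrite {1}/T sumR_exch /T -sumR_opp; apply: sumR_ext => j.
  rewrite -sumR_opp; apply: sumR_ext => i; rewrite Gs Msym; ring.
lra.
Qed.

Lemma w_zero_p p : sumR (fun j => (dpart sigma j s0 - sumR (fun i => C i j i s0)) * Vf K j s0 p) = 0.
Proof.
have h := hmeas p Os0.
have e1 : sumR (fun i => dS (fun s' p' => exp (sigma s') * Xs (redH K U) i s' p') i s0 p)
   = sumR (fun i => exp (sigma s0) * dpart sigma i s0 * Vf K i s0 p + exp (sigma s0) * DV i p).
  by apply: sumR_ext => i; exact: T1_eq.
have e2 : sumR (fun i => dP (fun s' p' => exp (sigma s') * Xp (redH K U) C i s' p') i s0 p)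
   = sumR (fun i => exp (sigma s0) * (- DV i p - sumR (fun j => sumR (fun k =>
        C i j k s0 * E i k * Vf K j s0 p + C i j k s0 * p k * Mm j i)))).
  by apply: sumR_ext => i; exact: T2_eq.
rewrite e1 e2 in h.
set X := sumR (fun i => dpart sigma i s0 * Vf K i s0 p).
set Y := sumR (fun i => sumR (fun j => sumR (fun k => C i j k s0 * E i k * Vf K j s0 p))).
set T := sumR (fun i => sumR (fun j => sumR (fun k => C i j k s0 * p k * Mm j i))).
have e3 : sumR (fun i => exp (sigma s0) * dpart sigma i s0 * Vf K i s0 p + exp (sigma s0) * DV i p)
   + sumR (fun i => exp (sigma s0) * (- DV i p - sumR (fun j => sumR (fun k =>
        C i j k s0 * E i k * Vf K j s0 p + C i j k s0 * p k * Mm j i))))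
   = exp (sigma s0) * (X - Y - T).
  rewrite /X /Y /T -!sumR_sub sumR_distr -sumR_split; apply: sumR_ext => i.
  have -> : sumR (fun j => sumR (fun k => C i j k s0 * E i k * Vf K j s0 p + C i j k s0 * p k * Mm j i))
     = sumR (fun j => sumR (fun k => C i j k s0 * E i k * Vf K j s0 p))
       + sumR (fun j => sumR (fun k => C i j k s0 * p k * Mm j i)).
    rewrite -sumR_split; apply: sumR_ext => j; exact: sumR_split.
  ring.
rewrite e3 in h.
have T0 : T = 0 by exact: T_zero.
have ep := exp_pos (sigma s0).
have XY : X - Y = 0.
  have : exp (sigma s0) * (X - Y) = 0 by rewrite T0 Rminus_0_r in h.
  move=> /Rmult_integral [|//]; lra.
have eY : Y = sumR (fun j => sumR (fun i => C i j i s0) * Vf K j s0 p).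
  rewrite /Y sumR_exch; apply: sumR_ext => j; rewrite sumR_distl; apply: sumR_ext => i.
  rewrite -(sumR_Er i (fun k => C i j k s0 * Vf K j s0 p)); apply: sumR_ext => k; ring.
rewrite -XY eY /X -sumR_sub; apply: sumR_ext => j; ring.
Qed.

Lemma sigma_C j : dpart sigma j s0 = sumR (fun i => C i j i s0).
Proof.
set w := fun j => dpart sigma j s0 - sumR (fun i => C i j i s0).
have hw : forall a, sumR (fun j => w j * K j a s0) = 0.
  move=> a; rewrite -(w_zero_p (fun b => E a b)); apply: sumR_ext => l.
  rewrite (@Vsym r K l s0 _ hsym) (sumR_Er a (fun b => K l b s0)); done.
have hq : sumR (fun i => sumR (fun j => K i j s0 * w i * w j)) = 0.
  rewrite sumR_exch -(sumR_0 r); apply: sumR_ext => l.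
  rewrite -(Rmult_0_l (w l)) -(hw l) sumR_distl; apply: sumR_ext => i; ring.
case: (Req_dec (w j) 0) => [h|h]; first by rewrite /w in h; lra.
have := hpos w (ex_intro _ j h); lra.
Qed.
End Meas.

Lemma phi_C r (hr : (2 <= r)%N) (C : 'I_r -> 'I_r -> 'I_r -> vec r -> R) (sigma : vec r -> R) s0
  (hskew : forall i j k, C i j k s0 = - C j i k s0)
  (hH2 : forall i j k : 'I_r, j != i -> k != i -> C i j j s0 = C i k k s0)
  (hs : forall j, dpart sigma j s0 = sumR (fun i => C i j i s0)) :
  forall i j, j != i -> C j i i s0 = dpart sigma j s0 / (1 - INR r).
Proof.
move=> i j ji.
have rn : 1 - INR r <> 0.
  have : (2 <= INR r) by change 2 with (INR 2); apply: le_INR; apply/leP.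
  lra.
have e : sumR (fun l => C l j l s0) = sumR (fun l => - C j i i s0 + (if l == j then C j i i s0 else 0)).
  apply: sumR_ext => l; case: eqP => [->|lj].
    have := hskew j j j; lra.
  rewrite hskew (hH2 j l i); [ring | by apply/eqP | by rewrite eq_sym].
rewrite hs e sumR_split sumR_const sumR_delta; field; done.
Qed.

Lemma Gsum r (C : 'I_r -> 'I_r -> 'I_r -> vec r -> R) s0 (phi : 'I_r -> R)
  (hskew : forall i j k, C i j k s0 = - C j i k s0)
  (hH1 : forall i j k : 'I_r, i != j -> j != k -> i != k -> C i j k s0 = 0)
  (hphi : forall i j, j != i -> C j i i s0 = phi j) :
  forall i j (p : vec r), sumR (fun k => C i j k s0 * p k) = phi i * p j - phi j * p i.
Proof.
move=> i j p; case: (eqVneq j i) => [->|ji].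
  have -> : phi i * p i - phi i * p i = 0 by ring.
  rewrite -(sumR_0 r).
  apply: sumR_ext => k; have := hskew i i k; nra.
have -> : phi i * p j - phi j * p i = C i j j s0 * p j + C i j i s0 * p i.
  rewrite (hphi j i) //; first rewrite hskew (hphi i j) //; first ring.
  by rewrite eq_sym.
rewrite -(sumR_delta j (fun k => C i j k s0 * p k)) -(sumR_delta i (fun k => C i j k s0 * p k)).
rewrite -sumR_split; apply: sumR_ext => k.
case: (boolP (k == j)) => [/eqP ->|kj].
  by rewrite (negbTE ji); ring.
case: (boolP (k == i)) => [/eqP ->|ki].
  ring.
rewrite hH1; first ring.
+ by rewrite eq_sym.
+ by rewrite eq_sym.
+ by rewrite eq_sym.
Qed.

Lemma dexpdiv k z0 : derivable_pt_lim (fun z => exp (z / k)) z0 (exp (z0 / k) / k).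
Proof.
have H := d_comp (d_mulc (/ k) (d_id z0)) (derivable_pt_lim_exp (z0 * / k)).
apply: (d_eq H); rewrite /Rdiv; ring.
Qed.

Lemma dP_scaled r (K : 'I_r -> 'I_r -> vec r -> R) U (c : vec r -> R) i s q :
  dP (fun s p => redH K U s (fun a => c s * p a)) i s q = c s * Vf K i s (fun a => c s * q a).
Proof.
rewrite /dP; apply: dpart_eq.
have Q := quad (fun a b => K a b s) (fun a => c s * q a) (fun a => c s * E i a).
have H := d_plus (d_cmul (/2) Q) (d_const (U s) 0).
apply: (d_eq (d_ext _ H)).
  move=> h; rewrite shiftE /redH; congr (_ * _ + _).
  apply: sumR_ext => a; apply: sumR_ext => b; ring.
rewrite /Vf Rplus_0_r [RHS]Rmult_comm Rmult_assoc; congr (_ * _).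
rewrite sumR_distl; apply: sumR_ext => a.
rewrite sumR_distl; apply: sumR_ext => b; ring.
Qed.

Lemma dS_scaled r (Om : vec r -> Prop) (K : 'I_r -> 'I_r -> vec r -> R) U sigma k i s q :
  (forall a b, smooth_on Om (K a b)) -> smooth_on Om U -> smooth_on Om sigma -> Om s ->
  dS (fun s p => redH K U s (fun a => exp (sigma s / k) * p a)) i s q
  = Wf K U i s (fun a => exp (sigma s / k) * q a)
    + dpart sigma i s / k * sumR (fun a => sumR (fun b => K a b s * (exp (sigma s / k) * q a) * (exp (sigma s / k) * q b))).
Proof.
move=> hK hU hsig Os; rewrite /dS; apply: dpart_eq.
set c0 := exp (sigma s / k).
have dc := d_comp (smooth_d s i hsig Os) (dexpdiv k (sigma (shift s i 0))).
rewrite shift0 -/c0 in dc.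
have Ht : forall a b, derivable_pt_lim
   (fun h => K a b (shift s i h) * (exp (sigma (shift s i h) / k) * q a) * (exp (sigma (shift s i h) / k) * q b)) 0
   (dpart (K a b) i s * (c0 * q a) * (c0 * q b) + 2 * (dpart sigma i s / k) * (K a b s * (c0 * q a) * (c0 * q b))).
  move=> a b.
  have H := d_mult (d_mult (smooth_d s i (hK a b) Os) (d_mulc (q a) dc)) (d_mulc (q b) dc).
  rewrite !shift0 -/c0 in H; apply: (d_eq H); rewrite /c0 /Rdiv; ring.
have HS := d_sum _ _ (fun a => d_sum _ _ (Ht a)).
have H := d_plus (d_cmul (/2) HS) (smooth_d s i hU Os).
apply: (d_eq H).
rewrite /Wf -/c0.
have -> : sumR (fun a => sumR (fun b => dpart (K a b) i s * (c0 * q a) * (c0 * q b) +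
      2 * (dpart sigma i s / k) * (K a b s * (c0 * q a) * (c0 * q b))))
   = sumR (fun a => sumR (fun b => dpart (K a b) i s * (c0 * q a) * (c0 * q b)))
     + 2 * (dpart sigma i s / k) * sumR (fun a => sumR (fun b => K a b s * (c0 * q a) * (c0 * q b))).
  rewrite sumR_distr -sumR_split; apply: sumR_ext => a.
  by rewrite sumR_distr -sumR_split.
set t := dpart sigma i s / k.
field.
Qed.

Theorem mainTheorem1
  (r : nat) (hr : (2 <= r)%N)
  (Om : vec r -> Prop) (hO : open_chart Om)
  (Kinv : 'I_r -> 'I_r -> vec r -> R) (U : vec r -> R)
  (C : 'I_r -> 'I_r -> 'I_r -> vec r -> R) (sigma : vec r -> R)
  (hK_smooth : forall i j, smooth_on Om (Kinv i j))
  (hK_sym : forall i j s, Om s -> Kinv i j s = Kinv j i s)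
  (hK_pos : forall s (p : vec r), Om s -> (exists i, p i <> 0) ->
              0 < sumR (fun i => sumR (fun j => Kinv i j s * p i * p j)))
  (hU_smooth : smooth_on Om U)
  (hC_smooth : forall i j k, smooth_on Om (C i j k))
  (hC_skew : forall i j k s, Om s -> C i j k s = - C j i k s)
  (hsigma : smooth_on Om sigma)
  (hmeas : preserves_measure Om (redH Kinv U) C sigma)
  (hHyp : hypH Om C) :
  let f := fun s : vec r => exp (sigma s / (1 - INR r)) in
  let Ht := fun s pt : vec r => redH Kinv U s (fun i => f s * pt i) in
  forall (sc pc : R -> vec r) (theta : R -> R) (tau : R),
    Om (sc (theta tau)) ->
    derivable_pt_lim theta tau (f (sc (theta tau))) ->
    (forall i, derivable_pt_lim (fun t => sc t i) (theta tau)
                 (Xs (redH Kinv U) i (sc (theta tau)) (pc (theta tau)))) ->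
    (forall i, derivable_pt_lim (fun t => pc t i) (theta tau)
                 (Xp (redH Kinv U) C i (sc (theta tau)) (pc (theta tau)))) ->
    let st := fun u => sc (theta u) in
    let pt := fun u => (fun i => pc (theta u) i / f (st u)) : vec r in
    forall i : 'I_r,
      derivable_pt_lim (fun u => st u i) tau (dP Ht i (st tau) (pt tau)) /\
      derivable_pt_lim (fun u => pt u i) tau (- dS Ht i (st tau) (pt tau)).
Proof.
move=> f Ht sc pc theta tau Os hth hsc hpc st pt i.
rewrite /pt /st /Ht /f; clear pt st Ht.
move: Os hth hsc hpc; rewrite /f => Os hth hsc hpc; clear f.
set s0 := sc (theta tau) in Os hth hsc hpc *.
set p0 := pc (theta tau) in hsc hpc *.
have skew0 : forall i j k, C i j k s0 = - C j i k s0 := fun i j k => hC_skew i j k s0 Os.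
have sym0 : forall a b, Kinv a b s0 = Kinv b a s0 := fun a b => hK_sym a b s0 Os.
have pos0 := fun p => hK_pos s0 p Os.
have hsig := sigma_C hK_smooth hU_smooth hsigma s0 Os skew0 sym0 pos0 hmeas.
have [hH1 hH2] := hHyp s0 Os.
have kn : 1 - INR r <> 0.
  have : (2 <= INR r) by change 2 with (INR 2); apply: le_INR; apply/leP.
  lra.
set kk := 1 - INR r in kn hth hsc hpc *.
set phi := fun j => dpart sigma j s0 / kk.
have hphi : forall i j, j != i -> C j i i s0 = phi j := phi_C hr C sigma s0 skew0 hH2 hsig.
have G := Gsum C s0 phi skew0 hH1 hphi.
set f0 := exp (sigma s0 / kk) in hth hsc hpc *.
have f0p : 0 < f0 := exp_pos _.
have f0n : f0 <> 0 by lra.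
set V := fun j => Vf Kinv j s0 p0.
have hXs : forall j, Xs (redH Kinv U) j s0 p0 = V j := fun j => dP_redH Kinv U j s0 p0.
have hpt : (fun a => f0 * (pc (theta tau) a / f0)) = p0.
  apply: functional_extensionality => a; rewrite /p0; field; done.
split.
  have H := d_comp hth (hsc i).
  apply: (d_eq H).
  rewrite (dP_scaled Kinv U (fun s => exp (sigma s / kk))) -/s0 -/f0 hpt hXs /V; ring.
have Hn := d_comp hth (hpc i).
have Hs := chain hO hsigma (fun u => sc (theta u)) (fun k => Xs (redH Kinv U) k s0 p0 * f0) Os
   (fun k => d_comp hth (hsc k)).
have Hd := d_comp Hs (dexpdiv kk (sigma s0)).
have HH := d_div Hn Hd f0n.
apply: (d_eq HH).
rewrite (dS_scaled Kinv kk i s0 _ hK_smooth hU_smooth hsigma Os) -/f0.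
have hpt2 : (fun a => f0 * (p0 a / f0)) = p0.
  apply: functional_extensionality => a; field; done.
rewrite -/s0 -/p0.
set PV := sumR (fun j => p0 j * V j).
set FV := sumR (fun j => phi j * V j).
have eXp : Xp (redH Kinv U) C i s0 p0 = - Wf Kinv U i s0 p0 - (phi i * PV - p0 i * FV).
  rewrite /Xp (dS_redH Kinv i s0 p0 hK_smooth hU_smooth Os); congr (_ - _).
  have -> : sumR (fun j => sumR (fun k => C i j k s0 * p0 k * dP (redH Kinv U) j s0 p0))
     = sumR (fun j => (phi i * p0 j - phi j * p0 i) * V j).
    apply: sumR_ext => j; rewrite -G sumR_distl; apply: sumR_ext => k; by rewrite dP_redH.
  rewrite /PV /FV sumR_distr sumR_distr -sumR_sub; apply: sumR_ext => j; ring.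
have eS : sumR (fun k => dpart sigma k s0 * (Xs (redH Kinv U) k s0 p0 * f0)) = kk * f0 * FV.
  rewrite /FV sumR_distr; apply: sumR_ext => k; rewrite hXs /phi; field; done.
have eQ : sumR (fun a => sumR (fun b => Kinv a b s0 * (f0 * (p0 a / f0)) * (f0 * (p0 b / f0)))) = PV.
  rewrite /PV; apply: sumR_ext => a; rewrite /V (Vsym Kinv a s0 p0 sym0) sumR_distr.
  apply: sumR_ext => b; field; done.
rewrite eXp eS eQ /phi.
rewrite hpt2 /Rsqr.
field; split; done.
Qed.
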